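(* For every field $\mathbb{F}$, all $n,d\ge1$ and every $n^d\times n^d$ matrix $M$ over $\mathbb{F}$, \[ \mathcal L_{\mathsf{nc,sm}}\big(\mathrm{ShiftedTensor}(M)\big)\ \ge\ \frac{\mathrm{PT\text{-}rank}(M)}{n^{\,d-\log_2 d+1}}. \]
   Context: Non-commutative set-multilinear formula size of a tensor $A:[N]^k\to\mathbb{F}$: if $k=1$, $\mathcal L_{\mathsf{nc,sm}}(A)$ is $1$ if $A\ne0$ and $0$ otherwise; if $k\ge2$ it is the minimum of $\sum_i(\mathcal L_{\mathsf{nc,sm}}(B_i)+\mathcal L_{\mathsf{nc,sm}}(C_i))$ over finite families $(e_i,f_i,B_i,C_i)$ with positive integers $e_i+f_i=k$, $B_i:[N]^{e_i}\to\mathbb{F}$, $C_i:[N]^{f_i}\to\mathbb{F}$, $A=\sum_iB_i\otimes C_i$ (where $(B\otimes C)(x,y)=B(x)C(y)$, concatenating coordinates in order). Pairing $\langle i,j\rangle=(i-1)n+j$. $\mathrm{ShiftedTensor}(M):[n^2]^{d+1}\to\mathbb{F}$, $\mathrm{ShiftedTensor}(M)(\langle p,i_1\rangle,\langle j_1,i_2\rangle,\dots,\langle j_{d-1},i_d\rangle,\langle j_d,q\rangle)=\mathbb 1\{p=q=1\}M_{(i_1,\dots,i_d),(j_1,\dots,j_d)}$. Partial transposes: for $k\in[d]$, $M^{\top_k}$ swaps the $k$-th row index with the $k$-th column index; $M^{\top_\kappa}$ composes these over $k\in\kappa\subseteq[d]$. $M$ is PT-basic if $\mathrm{rank}(M^{\top_\kappa})=1$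 for some $\kappa$; $\mathrm{PT\text{-}rank}(M)$ is the least number of PT-basic matrices summing to $M$. Logs base 2. *)

(* Defs.v *)
From HB Require Import structures.
From mathcomp Require Import all_boot all_order all_algebra.
From mathcomp Require Import boolp.
From mathcomp Require Import reals exp.
Set Implicit Arguments. Unset Strict Implicit. Unset Printing Implicit Defensive.
Import Order.TTheory GRing.Theory Num.Theory.
Local Open Scope ring_scope.

Lemma minNat_ex (P : nat -> Prop) :
  (exists n, P n) -> exists n, `[< P n >].
Proof. by case=> n Pn; exists n; apply/asboolP. Qed.

(* the least n with P n (P is always inhabited where we use it;
   the default 0 in the other branch is never reached) *)
Definition minNat (P : nat -> Prop) : nat :=
  match pselect (exists n, P n) with
  | left H => ex_minn (minNat_ex H)
  | right _ => 0%N
  end.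

(* A tensor [N]^k -> F is represented by a function on sequences over 'I_N;
   only its values on sequences of size k matter.  Coordinates are 0-indexed. *)
Definition tensor (F : fieldType) (N : nat) := seq 'I_N -> F.

(* SMle k A s  <->  L_{nc,sm}(A) <= s  for the order-k tensor A,
   following the recursive definition of L_{nc,sm}:
   - k = 1 : L(A) = 1 if A <> 0, 0 otherwise;
   - k >= 2 : min over finite families (e_i,f_i,B_i,C_i), e_i+f_i = k, e_i,f_i >= 1,
              A = sum_i B_i (x) C_i, of sum_i (L(B_i) + L(C_i)). *)
Inductive SMle (F : fieldType) (N : nat) : nat -> tensor F N -> nat -> Prop :=
| SMle_zero1 (A : tensor F N) (s : nat) :
    (forall x, size x = 1%N -> A x = 0) -> SMle 1 A s
| SMle_one1 (A : tensor F N) (s : nat) :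
    (1 <= s)%N -> SMle 1 A s
| SMle_split (k : nat) (A : tensor F N) (s m : nat) (e : 'I_m -> nat)
    (B C : 'I_m -> tensor F N) (sB sC : 'I_m -> nat) :
    (2 <= k)%N ->
    (forall i, 0 < e i < k)%N ->
    (forall i, SMle (e i) (B i) (sB i)) ->
    (forall i, SMle (k - e i) (C i) (sC i)) ->
    (\sum_(i < m) (sB i + sC i) <= s)%N ->
    (forall x, size x = k ->
       A x = \sum_(i < m) B i (take (e i) x) * C i (drop (e i) x)) ->
    SMle k A s.

Definition Lncsm (F : fieldType) (N k : nat) (A : tensor F N) : nat :=
  minNat (fun s => SMle k A s).

(* entry of a matrix at natural-number indices (0 outside the range) *)
Definition Mnat (F : fieldType) (m : nat) (M : 'M[F]_m) (r c : nat) : F :=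
  match insub r, insub c with
  | Some r', Some c' => M r' c'
  | _, _ => 0
  end.

Definition enc (n d : nat) (f : 'I_d -> nat) : nat :=
  (\sum_(k < d) f k * n ^ (d.-1 - k))%N.

(* k-th digit (0-indexed, most significant first) of an index in [n^d] *)
Definition digit (n d : nat) (i : nat) (k : 'I_d) : nat :=
  ((i %/ n ^ (d.-1 - k)) %% n)%N.

Definition Mtup (F : fieldType) (n d : nat) (M : 'M[F]_(n ^ d))
  (i j : 'I_d -> nat) : F := Mnat M (enc n i) (enc n j).

(* pairing <i,j> = i*n + j (0-indexed); left and right components of x in [n^2] *)
Definition pfst (n : nat) (x : nat) : nat := (x %/ n)%N.
Definition psnd (n : nat) (x : nat) : nat := (x %% n)%N.

(* ShiftedTensor(M)(<p,i_1>,<j_1,i_2>,...,<j_{d-1},i_d>,<j_d,q>)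
     = 1{p = q = first index} * M_{(i_1..i_d),(j_1..j_d)} ,  order d+1 over [n^2] *)
Definition ShiftedTensor (F : fieldType) (n d : nat) (M : 'M[F]_(n ^ d)) :
  tensor F (n ^ 2) :=
  fun x =>
    let y t := nth 0%N (map (@nat_of_ord _) x) t in
    if (pfst n (y 0%N) == 0%N) && (psnd n (y d) == 0%N) then
      Mtup M (fun k : 'I_d => psnd n (y k)) (fun k : 'I_d => pfst n (y k.+1))
    else 0.

(* M^{T_kappa}: for k in kappa swap the k-th row index with the k-th column index *)
Definition ptrans (F : fieldType) (n d : nat) (kappa : {set 'I_d})
  (M : 'M[F]_(n ^ d)) : 'M[F]_(n ^ d) :=
  \matrix_(r, c)
    Mtup M (fun k => if k \in kappa then digit n c k else digit n r k)
           (fun k => if k \in kappa then digit n r k else digit n c k).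

Definition PTbasic (F : fieldType) (n d : nat) (M : 'M[F]_(n ^ d)) : Prop :=
  exists kappa : {set 'I_d}, \rank (ptrans kappa M) = 1%N.

Definition PTrank (F : fieldType) (n d : nat) (M : 'M[F]_(n ^ d)) : nat :=
  minNat (fun r => exists B : 'I_r -> 'M[F]_(n ^ d),
             (forall i, PTbasic (B i)) /\ M = \sum_(i < r) B i).

Definition log2 (R : realType) (x : R) : R := ln x / ln 2.

(* Main.v *)
Require Import Defs.
From HB Require Import structures.
From mathcomp Require Import all_boot all_order all_algebra.
From mathcomp Require Import boolp reals exp.
From mathcomp Require Import zify ring lra.
From Stdlib Require List.
Import Order.TTheory GRing.Theory Num.Theory.
Local Open Scope ring_scope.
Set Implicit Arguments. Unset Strict Implicit. Unset Printing Implicit Defensive.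
Lemma minNatP (P : nat -> Prop) : (exists n, P n) ->
  P (minNat P) /\ forall m, P m -> (minNat P <= m)%N.
Proof.
move=> H; rewrite /minNat; case: pselect => // H'.
case: ex_minnP => m /asboolP Pm Hmin; split=> // m' Pm'; apply: Hmin; exact/asboolP.
Qed.

Section Decomp.
Variables (F : fieldType) (N : nat).
Local Notation tens := (tensor F N).

Fixpoint prodT (p : seq (nat * tens)) (x : seq 'I_N) : F :=
  if p is (l, T) :: p' then T (take l x) * prodT p' (drop l x) else 1.

Definition plen (p : seq (nat * tens)) := sumn (map fst p).

Lemma prodT_cat p q x : prodT (p ++ q) x =
  prodT p (take (plen p) x) * prodT q (drop (plen p) x).
Proof.
elim: p x => [|[l T] p IH] x /=; first by rewrite drop0 mul1r.
rewrite IH /plen /= take_takel ?leq_addr // mulrA; congr (_ * _ * _).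
  by rewrite take_drop addnC.
by rewrite drop_drop addnC.
Qed.

Lemma eq_big_In (T : Type) (l : seq T) (f g : T -> F) :
  (forall q, List.In q l -> f q = g q) -> \sum_(q <- l) f q = \sum_(q <- l) g q.
Proof.
elim: l => [|a l IH] H; first by rewrite !big_nil.
rewrite !big_cons H /=; last by left.
by rewrite IH // => q Hq; apply: H; right.
Qed.

Definition good k (p : seq (nat * tens)) :=
  [/\ plen p = k, all (fun l => 0 < l)%N (map fst p) & (k <= 2 ^ size p)%N].

Lemma decomp k A s : SMle k A s -> exists P : seq (seq (nat * tens)),
  [/\ (size P <= s)%N, (forall p, List.In p P -> good k p) &
      (forall x, size x = k -> A x = \sum_(p <- P) prodT p x)].
Proof.
elim=> {k A s}.
- move=> A s HA; exists [::]; split=> //= x Hx; by rewrite big_nil HA.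
- move=> A s Hs; exists [:: [:: (1%N, A)]]; split=> //=.
    by move=> p [<-|//]; split.
  move=> x Hx; rewrite big_seq1 /= mulr1 take_oversize ?Hx //.
- move=> k A s m e B C sB sC Hk He _ IHB _ IHC Hs HA.
  have [PB HPB] := choice IHB; have [PC HPC] := choice IHC.
  pose Pi (i : 'I_m) : seq (seq (nat * tens)) :=
    if (k <= (e i).*2)%N then
      (if nilp (PC i) then [::] else [seq p ++ [:: ((k - e i)%N, C i)] | p <- PB i])
    else (if nilp (PB i) then [::] else [seq (e i, B i) :: p | p <- PC i]).
  exists (\big[cat/[::]]_(i < m) Pi i); split.
  + rewrite (big_morph size (id1 := 0%N) (op1 := addn)) //; last by move=> *; rewrite size_cat.
    apply: leq_trans Hs; apply: leq_sum => i _.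
    have [HB1 _ _] := HPB i; have [HC1 _ _] := HPC i.
    rewrite /Pi; case: ifP => _; case: ifP => _ //=; rewrite size_map.
      exact: leq_trans HB1 (leq_addr _ _).
    exact: leq_trans HC1 (leq_addl _ _).
  + apply: (big_ind (fun P => forall p, List.In p P -> good k p)) => //.
      by move=> P1 P2 H1 H2 p /List.in_app_iff [/H1|/H2].
    move=> i _ p; have [_ HB2 _] := HPB i; have [_ HC2 _] := HPC i.
    have /andP[e0 ek] := He i.
    rewrite /Pi; case: ifP => Hke; case: ifP => _ //= /List.in_map_iff [q [<- Hq]].
      have [q1 q2 q3] := HB2 q Hq; split.
      * by rewrite /plen map_cat sumn_cat -/(plen q) q1 /= addn0 subnKC // ltnW.
      * by rewrite map_cat all_cat q2 /= subn_gt0 ek.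
      * rewrite size_cat addn1 expnS mul2n; apply: leq_trans Hke _; by rewrite leq_double.
    have [q1 q2 q3] := HC2 q Hq; split.
    * by rewrite /plen /= -/(plen q) q1 subnKC // ltnW.
    * by rewrite /= e0 q2.
    * rewrite /= expnS mul2n; apply: leq_trans (_ : k <= (k - e i).*2)%N _; last by rewrite leq_double.
      move/negbT: Hke; rewrite -ltnNge => Hke; rewrite doubleB -addnn; lia.
  + move=> x Hx; rewrite HA // (big_morph (fun P => \sum_(p <- P) prodT p x) (id1 := 0) (op1 := +%R)); first last.
    - by rewrite big_nil.
    - by move=> ? ?; rewrite /= big_cat.
    apply: eq_bigr => i _.
    have [_ HB2 HB3] := HPB i; have [_ HC2 HC3] := HPC i.
    have /andP[e0 ek] := He i.
    have sz1 : size (take (e i) x) = e i by rewrite size_takel // Hx ltnW.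
    have sz2 : size (drop (e i) x) = (k - e i)%N by rewrite size_drop Hx.
    rewrite /Pi; case: ifP => Hke.
    * case: ifP => Hn.
        move: Hn; case E: (PC i) => //= _; by rewrite HC3 // E !big_nil mulr0.
      rewrite big_map HB3 // big_distrl /=; apply: eq_big_In => q Hq.
      have [q1 _ _] := HB2 q Hq.
      by rewrite prodT_cat q1 /= mulr1 [take (k - e i) _]take_oversize ?sz2.
    * case: ifP => Hn.
        move: Hn; case E: (PB i) => //= _; by rewrite HB3 // E !big_nil mul0r.
      rewrite big_map HC3 // big_distrr /=; exact: eq_bigr.
Qed.
Fixpoint facpar (b : bool) (p : seq (nat * tens)) : seq bool :=
  if p is (l, _) :: p' then nseq l b ++ facpar (~~ b) p' else [::].

Fixpoint prodSel (sel b : bool) (p : seq (nat * tens)) (x : seq 'I_N) : F :=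
  if p is (l, T) :: p' then
    (if b == sel then T (take l x) else 1) * prodSel sel (~~ b) p' (drop l x)
  else 1.

Lemma size_facpar b p : size (facpar b p) = plen p.
Proof. by elim: p b => [|[l T] p IH] b //=; rewrite size_cat size_nseq IH. Qed.

Lemma prodT_sel b p x : prodT p x = prodSel b b p x * prodSel (~~ b) b p x.
Proof.
elim: p b x => [|[l T] p IH] b x /=; first by rewrite mulr1.
rewrite (IH (~~ b)) negbK; case: b => /=; ring.
Qed.

Lemma prodSel_local sel b p (x y : seq 'I_N) x0 :
  size x = plen p -> size y = plen p ->
  (forall t, (t < plen p)%N -> nth false (facpar b p) t = sel -> nth x0 x t = nth x0 y t) ->
  prodSel sel b p x = prodSel sel b p y.
Proof.
elim: p b x y => [|[l T] p IH] b x y //= Hx Hy H.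
have Hl : (l <= size x)%N by rewrite Hx /plen /= leq_addr.
have Hl' : (l <= size y)%N by rewrite Hy /plen /= leq_addr.
congr (_ * _).
  case: eqP => // Hb; congr (T _); apply: (@eq_from_nth _ x0).
    by rewrite !size_takel.
  move=> t; rewrite size_takel // => Ht; rewrite !nth_take //; apply: H.
    by rewrite /plen /=; apply: leq_trans Ht (leq_addr _ _).
  by rewrite nth_cat size_nseq Ht nth_nseq Ht.
apply: IH.
- by rewrite size_drop Hx /plen /= addKn.
- by rewrite size_drop Hy /plen /= addKn.
move=> t Ht Hs; rewrite !nth_drop; apply: H.
  by rewrite /plen /= ltn_add2l.
by rewrite nth_cat size_nseq ltnNge leq_addr /= addKn.
Qed.

Fixpoint nsame (s : seq bool) : nat :=
  if s is a :: s' then (if s' is b :: _ then (a == b) + nsame s' else 0) else 0.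

Lemma nsame_sum s : nsame s = (\sum_(k < (size s).-1) (nth false s k == nth false s k.+1))%N.
Proof.
elim: s => [|a s IH]; first by rewrite big_ord0.
case: s IH => [|b s] IH; first by rewrite big_ord0.
transitivity ((a == b) + nsame (b :: s))%N; first by [].
by rewrite IH big_ord_recl.
Qed.

Lemma nsame_nseq l b s : (0 < l)%N -> (nilp s || (head b s == ~~ b)) ->
  nsame (nseq l b ++ s) = (l.-1 + nsame s)%N.
Proof.
elim: l => [//|l IH] _ Hs.
case: l IH => [|l] IH.
  by case: s {IH} Hs => [|c s] //= /eqP ->; case: b.
transitivity ((b == b) + nsame (nseq l.+1 b ++ s))%N; first by [].
by rewrite IH // eqxx.
Qed.

Definition posl (p : seq (nat * tens)) := all (fun l => 0 < l)%N (map fst p).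

Lemma size_le_plen p : posl p -> (size p <= plen p)%N.
Proof.
elim: p => [|[l T] p IH] //= /andP[H1 H2]; rewrite /plen /=.
have := IH H2; move: H1 => /= H1; rewrite /plen; lia.
Qed.

Lemma nsame_facpar b p : posl p -> nsame (facpar b p) = (plen p - size p)%N.
Proof.
elim: p b => [|[l T] p IH] b //= /andP[H1 H2].
rewrite nsame_nseq //; last first.
  case: p H2 {IH} => [|[l' T'] p] //= /andP[H3 _].
  by case: l' H3 => //= l' _; rewrite eqxx orbT.
rewrite IH //; have := size_le_plen H2; move: H1 => /= H1; rewrite /plen /=; lia.
Qed.
End Decomp.

Lemma SMle_ex (F : fieldType) (N k : nat) (A : tensor F N) :
  (0 < k)%N -> exists s, SMle k A s.
Proof.
elim: k A => [//|k IH] A _.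
case: k IH => [|k] IH; first by exists 1%N; apply: SMle_one1.
pose C (a : 'I_N) : tensor F N := fun z => A (a :: z).
have /choice [sC HsC] : forall a, exists s, SMle k.+1 (C a) s by move=> a; apply: IH.
pose B (a : 'I_N) : tensor F N := fun y => ((head a y == a)%:R : F).
exists (\sum_(a < N) (1 + sC a))%N.
apply: (@SMle_split F N k.+2 A _ N (fun=> 1%N) B C (fun=> 1%N) sC) => //.
  by move=> a; apply: SMle_one1.
case=> [//|x0 x] /= _; rewrite take0 drop0.
  rewrite (bigD1 x0) //= /B /= eqxx mul1r big1 ?addr0 // => a /negbTE Ha.
  by rewrite eq_sym Ha mul0r.
Qed.

Local Close Scope ring_scope.
Section EncDigit.
Variable n : nat.
Hypothesis n0 : (0 < n)%N.

Lemma expn_subS d k : (k < d)%N -> n ^ (d - k) = n * n ^ (d.-1 - k).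
Proof. move=> H; rewrite (_ : (d - k = (d.-1 - k).+1)%N) ?expnS //; lia. Qed.

Lemma encS d (f : 'I_d.+1 -> nat) :
  @enc n d.+1 f = n * @enc n d (fun k => f (widen_ord (leqnSn d) k)) + f ord_max.
Proof.
rewrite /enc big_ord_recr /= subnn expn0 muln1; congr (_ + _).
rewrite big_distrr; apply: eq_bigr => k _ /=.
by rewrite expn_subS // mulnCA.
Qed.

Lemma digit_lt d r k : (@digit n d r k < n)%N.
Proof. by rewrite /digit ltn_mod. Qed.

Lemma enc_lt d (f : 'I_d -> nat) : (forall k, f k < n)%N -> (@enc n d f < n ^ d)%N.
Proof.
elim: d f => [|d IH] f Hf; first by rewrite /enc big_ord0.
rewrite encS expnS.
have := IH (fun k => f (widen_ord (leqnSn d) k)) (fun k => Hf _).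
have := Hf ord_max; set E := enc _ _; set a := f _; set P := n ^ d; nia.
Qed.

Lemma digitS_widen d r (k : 'I_d) :
  @digit n d.+1 r (widen_ord (leqnSn d) k) = @digit n d (r %/ n) k.
Proof.
by rewrite /digit /= expn_subS // divnMA.
Qed.

Lemma digitS_max d r : @digit n d.+1 r ord_max = r %% n.
Proof. by rewrite /digit /= subnn expn0 divn1. Qed.

Lemma enc_digit d r : (r < n ^ d)%N -> @enc n d (@digit n d r) = r.
Proof.
elim: d r => [|d IH] r Hr.
  by move: Hr; rewrite expn0 ltnS leqn0 => /eqP ->; rewrite /enc big_ord0.
rewrite encS digitS_max.
under eq_fun do rewrite digitS_widen.
rewrite IH; first by rewrite mulnC -divn_eq.
by rewrite ltn_divLR // -expnSr.
Qed.

Lemma digit_enc d (f : 'I_d -> nat) : (forall k, f k < n)%N ->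
  forall k, @digit n d (@enc n d f) k = f k.
Proof.
elim: d f => [|d IH] f Hf k; first by case: k.
rewrite encS.
have Hdiv : (n * @enc n d (fun k => f (widen_ord (leqnSn d) k)) + f ord_max) %/ n
   = @enc n d (fun k => f (widen_ord (leqnSn d) k)).
  by rewrite mulnC divnMDl // divn_small ?addn0.
case: (ltnP k d) => Hk.
  have -> : k = widen_ord (leqnSn d) (Ordinal Hk) by apply: val_inj.
  by rewrite digitS_widen Hdiv IH.
have -> : k = ord_max by apply: val_inj => /=; have := ltn_ord k; lia.
by rewrite digitS_max mulnC modnMDl modn_small.
Qed.
End EncDigit.

Local Open Scope ring_scope.

Definition mix d (kap : {set 'I_d}) (a b : 'I_d -> nat) : 'I_d -> nat :=
  fun k => if k \in kap then a k else b k.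
Section PT.
Variables (F : fieldType) (n d : nat).
Hypothesis n0 : (0 < n)%N.

Lemma digit_enc_fun (f : 'I_d -> nat) : (forall k, f k < n)%N -> @digit n d (@enc n d f) = f.
Proof. by move=> H; apply: funext => k; apply: digit_enc. Qed.

Lemma mix_lt kap a b : (forall k, a k < n)%N -> (forall k, b k < n)%N ->
  forall k, (@mix d kap a b k < n)%N.
Proof. by move=> Ha Hb k; rewrite /mix; case: ifP. Qed.

Lemma PT_split (kap : {set 'I_d}) (f g : ('I_d -> nat) -> F) :
  let B : 'M[F]_(n ^ d) := \matrix_(r, c)
     (f (mix kap (@digit n d c) (@digit n d r)) * g (mix kap (@digit n d r) (@digit n d c))) in
  B = 0 \/ PTbasic B.
Proof.
move=> B.
have dl : forall r, forall k, (@digit n d r k < n)%N by move=> r k; apply: digit_lt.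
have E : ptrans kap B = \matrix_(r, c) (f (@digit n d r) * g (@digit n d c)).
  apply/matrixP => r c; rewrite !mxE /Mtup /Mnat.
  rewrite (insubT (fun x => x < n ^ d)%N (enc_lt n0 (mix_lt kap (dl c) (dl r)))).
  rewrite (insubT (fun x => x < n ^ d)%N (enc_lt n0 (mix_lt kap (dl r) (dl c)))).
  rewrite mxE /= !digit_enc_fun; try exact: mix_lt.
  by congr (f _ * g _); apply: funext => k; rewrite /mix; case: (k \in kap).
have rk : (\rank (ptrans kap B) <= 1)%N.
  rewrite E (_ : \matrix_(r, c) _ = (\col_r f (@digit n d r)) *m (\row_c g (@digit n d c))).
    exact: mulmx_max_rank.
  by apply/matrixP => r c; rewrite !mxE big_ord1 !mxE.
case: (ltnP 0 (\rank (ptrans kap B))) => Hr.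
  by right; exists kap; apply/eqP; rewrite eqn_leq rk.
left; move: Hr; rewrite leqn0 mxrank_eq0 => /eqP H0.
apply/matrixP => r c; rewrite !mxE.
have := congr1 (fun M : 'M[F]_(n ^ d) => M (Ordinal (enc_lt n0 (mix_lt kap (dl c) (dl r))))
                                       (Ordinal (enc_lt n0 (mix_lt kap (dl r) (dl c))))) H0.
by rewrite E !mxE /= !digit_enc_fun //; apply: mix_lt.
Qed.
End PT.

Lemma In_mem (T : eqType) (x : T) (s : seq T) : List.In x s -> x \in s.
Proof. by elim: s => //= a s IH [->|/IH H]; rewrite inE ?eqxx ?H ?orbT. Qed.

Section PTdec.
Variables (F : fieldType) (n d : nat).
Local Notation MT := 'M[F]_(n ^ d).

Definition PTdec (M : MT) (m : nat) := exists m' (B : 'I_m' -> MT),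
  [/\ (m' <= m)%N, forall i, PTbasic (B i) & M = \sum_(i < m') B i].

Lemma PTdec0 : PTdec 0 0.
Proof. by exists 0%N, (fun=> 0); split=> //; [case | rewrite big_ord0]. Qed.

Lemma PTdec1 B : B = 0 \/ PTbasic B -> PTdec B 1.
Proof.
case=> [->|H]; first by exists 0%N, (fun=> 0); split=> //; [case | rewrite big_ord0].
by exists 1%N, (fun=> B); split=> //; rewrite big_ord1.
Qed.

Lemma PTdec_le M a b : (a <= b)%N -> PTdec M a -> PTdec M b.
Proof. by move=> ab [m' [B [H1 H2 H3]]]; exists m', B; split=> //; apply: leq_trans ab. Qed.

Lemma PTdecD A B a b : PTdec A a -> PTdec B b -> PTdec (A + B) (a + b).
Proof.
move=> [a' [BA [Ha1 Ha2 Ha3]]] [b' [BB [Hb1 Hb2 Hb3]]].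
exists (a' + b')%N, (fun i => match split i with inl j => BA j | inr j => BB j end).
split; first exact: leq_add.
  by move=> i; case: (split i).
rewrite big_split_ord Ha3 Hb3; congr (_ + _); apply: eq_bigr => j _.
  by rewrite (unsplitK (inl _ j) : split (lshift _ j) = inl j).
by rewrite (unsplitK (inr _ j) : split (rshift _ j) = inr j).
Qed.

Lemma PTdec_sum (T : Type) (s : seq T) (G : T -> MT) (c : T -> nat) :
  (forall x, List.In x s -> PTdec (G x) (c x)) ->
  PTdec (\sum_(x <- s) G x) (\sum_(x <- s) c x)%N.
Proof.
elim: s => [|x s IH] H; first by rewrite !big_nil; exact: PTdec0.
rewrite !big_cons; apply: PTdecD; first by apply: H; left.
by apply: IH => y Hy; apply: H; right.
Qed.

Lemma PTdec_sumA (T : finType) (A : {pred T}) (G : T -> MT) :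
  (forall x, x \in A -> G x = 0 \/ PTbasic (G x)) ->
  PTdec (\sum_(x in A) G x) #|A|.
Proof.
move=> H; rewrite -big_enum cardE -sum1_size.
apply: PTdec_sum => x Hx; apply: PTdec1; apply: H.
by rewrite -mem_enum; apply: In_mem.
Qed.

Lemma PTrank_le M m : PTdec M m -> (PTrank M <= m)%N.
Proof.
move=> [m' [B [H1 H2 H3]]].
have Hex : exists r, exists B : 'I_r -> MT, (forall i, PTbasic (B i)) /\ M = \sum_(i < r) B i.
  by exists m', B.
have [_ Hmin] := minNatP Hex.
by apply: leq_trans (Hmin _ _) H1; exists B.
Qed.
End PTdec.

Section Core.
Variables (F : fieldType) (n' d : nat).
Local Notation n := n'.+1.
Local Notation tens := (tensor F (n ^ 2)).

Lemma pr_lt (a b : nat) : ((a %% n) * n + b %% n < n ^ 2)%N.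
Proof. have := ltn_pmod a (ltn0Sn n'); have := ltn_pmod b (ltn0Sn n'); nia. Qed.

Definition pr (a b : nat) : 'I_(n ^ 2) := Ordinal (pr_lt a b).

Definition ext (f : 'I_d -> nat) (t : nat) : nat := oapp f 0%N (insub t : option 'I_d).

Lemma ext_val f (k : 'I_d) : ext f k = f k.
Proof. by rewrite /ext valK. Qed.

Lemma ext_lt f t (Ht : (t < d)%N) : ext f t = f (Ordinal Ht).
Proof. by rewrite /ext insubT. Qed.

Definition jprev (j : nat -> nat) (t : nat) := if t is t'.+1 then j t' else 0%N.
Definition icur (i : nat -> nat) (t : nat) := if (t < d)%N then i t else 0%N.

Definition X (i j : nat -> nat) : seq 'I_(n ^ 2) :=
  [seq pr (jprev j t) (icur i t) | t <- iota 0 d.+1].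

Lemma size_X i j : size (X i j) = d.+1.
Proof. by rewrite size_map size_iota. Qed.

Lemma nth_X x0 i j t : (t <= d)%N -> nth x0 (X i j) t = pr (jprev j t) (icur i t).
Proof. by move=> Ht; rewrite (nth_map 0%N) ?size_iota // nth_iota. Qed.

Lemma X_ext i j j' : (forall k, (k < d)%N -> j k = j' k) -> X i j = X i j'.
Proof.
move=> H; apply/eq_in_map => t; rewrite mem_iota add0n ltnS => /andP[_ Ht].
case: t Ht => [//|t] Ht /=; by rewrite /jprev H.
Qed.

Lemma ST_X (M : 'M[F]_(n ^ d)) (r c : 'I_(n ^ d)) :
  ShiftedTensor M (X (ext (@digit n d r)) (ext (@digit n d c))) = M r c.
Proof.
have dl : forall r (k : 'I_d), (@digit n d r k < n)%N by move=> *; apply: digit_lt.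
rewrite /ShiftedTensor.
have Hy : forall t, (t <= d)%N -> nth 0%N (map (@nat_of_ord _) (X (ext (@digit n d r)) (ext (@digit n d c)))) t = ((jprev (ext (@digit n d c)) t) %% n * n + icur (ext (@digit n d r)) t %% n)%N.
  move=> t Ht; rewrite (nth_map (pr 0 0)) ?size_X // nth_X //.
rewrite Hy // Hy // {1 2}/pfst {1 2}/psnd /=.
rewrite mod0n mul0n add0n divn_small ?ltn_pmod // eqxx /=.
rewrite /icur ltnn mod0n addn0 modnMl eqxx /=.
rewrite /Mtup.
have -> : (fun k : 'I_d => psnd n (nth 0%N (map (@nat_of_ord _) (X (ext (@digit n d r)) (ext (@digit n d c)))) k)) = @digit n d r.
  apply: funext => k; rewrite Hy ?(ltnW (ltn_ord k)) // /icur ltn_ord ext_val.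
  by rewrite /psnd modnMDl !modn_small.
have -> : (fun k : 'I_d => pfst n (nth 0%N (map (@nat_of_ord _) (X (ext (@digit n d r)) (ext (@digit n d c)))) k.+1)) = @digit n d c.
  apply: funext => k; rewrite Hy ?(ltn_ord k) // /jprev ext_val.
  by rewrite /pfst divnMDl // divn_small ?ltn_pmod // addn0 modn_small.
rewrite /Mnat !enc_digit //.
by rewrite !valK.
Qed.

Section Prod.
Variable p : seq (nat * tens).
Hypothesis plen_p : plen p = d.+1.
Hypothesis pos_p : posl p.

Definition par t := nth false (facpar false p) t.
Definition kap : {set 'I_d} := [set k : 'I_d | par k].
Definition cut (k : nat) : bool := par k != par k.+1.
Definition Fam : pred {ffun 'I_d -> 'I_n} :=
  family (fun k : 'I_d => [pred a : 'I_n | cut k ==> (a == ord0)]).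
Definition vext (v : {ffun 'I_d -> 'I_n}) := ext (fun k => nat_of_ord (v k)).
Definition jv (v : {ffun 'I_d -> 'I_n}) (j : nat -> nat) := fun k => if cut k then j k else vext v k.
Definition indic (v : {ffun 'I_d -> 'I_n}) (j : nat -> nat) : F := \prod_(k : 'I_d | ~~ cut k) ((j k == v k)%:R).

Lemma X_local sel v (i j : 'I_d -> nat) x0 t :
  let w := if sel then mix kap i j else mix kap j i in
  (t < d.+1)%N -> par t = sel ->
  nth x0 (X (ext i) (jv v (ext j))) t = nth x0 (X (ext w) (jv v (ext w))) t.
Proof.
move=> w Ht Hp; rewrite !nth_X //; congr pr.
  case: t Ht Hp => [//|t] Ht Hp /=; rewrite /jv /cut; case: ifP => // Hc.
  rewrite !ext_lt /w; move: Hc; rewrite Hp.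
  by case: sel {Hp w} => /=; rewrite /mix /kap inE /=; case: (par t).
rewrite /icur; case: ifP => // Htd; rewrite !ext_lt /w.
by case: sel Hp {w} => /= Hp; rewrite /mix /kap inE /= Hp.
Qed.
Definition indf (v : {ffun 'I_d -> 'I_n}) (y : 'I_d -> nat) : F :=
  \prod_(k : 'I_d | ~~ cut k && (k \in kap)) ((y k == v k)%:R).
Definition indg (v : {ffun 'I_d -> 'I_n}) (y : 'I_d -> nat) : F :=
  \prod_(k : 'I_d | ~~ cut k && (k \notin kap)) ((y k == v k)%:R).
Definition fv (v : {ffun 'I_d -> 'I_n}) (y : 'I_d -> nat) : F :=
  indf v y * prodSel false false p (X (ext y) (jv v (ext y))).
Definition gv (v : {ffun 'I_d -> 'I_n}) (y : 'I_d -> nat) : F :=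
  indg v y * prodSel true false p (X (ext y) (jv v (ext y))).

Lemma Gsplit v (i j : 'I_d -> nat) :
  indic v (ext j) * prodT p (X (ext i) (jv v (ext j))) =
  fv v (mix kap j i) * gv v (mix kap i j).
Proof.
rewrite (prodT_sel false) /indic (bigID (fun k => k \in kap)) /=.
have E1 : \prod_(k : 'I_d | ~~ cut k && (k \in kap)) ((ext j k == v k)%:R : F) = indf v (mix kap j i).
  by apply: eq_bigr => k /andP[_ Hk]; rewrite ext_val /mix Hk.
have E2 : \prod_(k : 'I_d | ~~ cut k && ~~ (k \in kap)) ((ext j k == v k)%:R : F) = indg v (mix kap i j).
  by apply: eq_bigr => k /andP[_ Hk]; rewrite ext_val /mix (negbTE Hk).
have E3 : prodSel false false p (X (ext i) (jv v (ext j))) =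
          prodSel false false p (X (ext (mix kap j i)) (jv v (ext (mix kap j i)))).
  apply: (@prodSel_local _ _ _ _ _ _ _ (pr 0 0)); rewrite ?size_X ?plen_p //.
  by move=> t Ht Hp; have := X_local v i j (pr 0 0) Ht Hp.
have E4 : prodSel true false p (X (ext i) (jv v (ext j))) =
          prodSel true false p (X (ext (mix kap i j)) (jv v (ext (mix kap i j)))).
  apply: (@prodSel_local _ _ _ _ _ _ _ (pr 0 0)); rewrite ?size_X ?plen_p //.
  by move=> t Ht Hp; have := X_local v i j (pr 0 0) Ht Hp.
rewrite E1 E2 /= E3 E4 /fv /gv; ring.
Qed.
Lemma sumv (i j : nat -> nat) : (forall k : 'I_d, j k < n)%N ->
  prodT p (X i j) = \sum_(v in Fam) indic v j * prodT p (X i (jv v j)).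
Proof.
move=> Hj.
pose v0 : {ffun 'I_d -> 'I_n} := [ffun k : 'I_d => if cut k then ord0 else inord (j k)].
have v0F : v0 \in Fam.
  by rewrite /Fam; apply/familyP => k; rewrite !inE ffunE; case: (cut k).
have jv0 : X i (jv v0 j) = X i j.
  apply: X_ext => k Hk; rewrite /jv; case: ifP => // Hc.
  by rewrite /vext ext_lt ffunE Hc inordK // (Hj (Ordinal Hk)).
have ind0 : indic v0 j = 1.
  by apply: big1 => k Hk; rewrite ffunE (negbTE Hk) inordK ?eqxx.
rewrite (bigD1 v0) //= ind0 jv0 mul1r big1 ?addr0 // => v /andP[vF vne].
case: (boolP [exists k : 'I_d, ~~ cut k && (j k != v k)]).
  case/existsP => k /andP[Hc Hjk].
  by rewrite /indic (bigD1 k) //= (negbTE Hjk) !mul0r.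
move/existsPn => H; exfalso; move/eqP: vne; apply; apply/ffunP => k.
rewrite ffunE; have := H k; case: ifP => Hc /=.
  by move=> _; move: vF; rewrite /Fam => /familyP vF; have := vF k; rewrite inE Hc /= => /eqP.
by move/negPn/eqP => Hjk; apply: val_inj => /=; rewrite inordK // Hjk.
Qed.
Lemma card_Fam : #|Fam| = (n ^ (d.+1 - size p))%N.
Proof.
rewrite /Fam card_family foldrE big_map big_enum /=.
rewrite (eq_bigr (fun k : 'I_d => if ~~ cut k then n else 1%N)); last first.
  move=> k _; case: (cut k) => /=.
    by rewrite (eq_card (B := pred1 (ord0 : 'I_n))) ?card1 // => a; rewrite !inE.
  by rewrite (eq_card (B := predT)) ?card_ord // => a; rewrite !inE.
rewrite -big_mkcond /= (eq_bigl (fun k => k \in [pred k : 'I_d | ~~ cut k])) //.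
rewrite prod_nat_const; congr (expn _ _).
rewrite -sum1_card big_mkcond /=.
rewrite (eq_bigr (fun k : 'I_d => nat_of_bool (par k == par k.+1))); last first.
  by move=> k _; rewrite inE /cut negbK; case: (_ == _).
rewrite -plen_p -(nsame_facpar false pos_p) nsame_sum size_facpar plen_p /=.
by [].
Qed.
Definition Mp : 'M[F]_(n ^ d) :=
  \matrix_(r, c) prodT p (X (ext (@digit n d r)) (ext (@digit n d c))).

Lemma Mp_dec : PTdec Mp (n ^ (d.+1 - size p)).
Proof.
rewrite -card_Fam.
have -> : Mp = \sum_(v in Fam) (\matrix_(r, c)
   (fv v (mix kap (@digit n d c) (@digit n d r)) * gv v (mix kap (@digit n d r) (@digit n d c)))).
  apply/matrixP => r c; rewrite summxE !mxE (sumv (ext (@digit n d r))).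
    by apply: eq_bigr => v _; rewrite mxE -Gsplit.
  by move=> k; rewrite ext_val digit_lt.
apply: PTdec_sumA => v _; exact: PT_split.
Qed.
End Prod.
Lemma PTdec_M (M : 'M[F]_(n ^ d)) (P : seq (seq (nat * tens))) :
  (forall q, List.In q P -> plen q = d.+1 /\ posl q) ->
  (forall x, size x = d.+1 -> ShiftedTensor M x = \sum_(q <- P) prodT q x) ->
  PTdec M (\sum_(q <- P) n ^ (d.+1 - size q))%N.
Proof.
move=> HP HT.
have -> : M = \sum_(q <- P) Mp q.
  apply/matrixP => r c; rewrite summxE -ST_X HT ?size_X //.
  by apply: eq_bigr => q _; rewrite mxE.
apply: PTdec_sum => q Hq; have [h1 h2] := HP q Hq; exact: Mp_dec.
Qed.
End Core.

Lemma sum_le_size (R : realType) (T : Type) (l : seq T) (f : T -> R) (c : R) :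
  (forall q, List.In q l -> f q <= c) -> \sum_(q <- l) f q <= (size l)%:R * c.
Proof.
elim: l => [|a l IH] H; first by rewrite big_nil mul0r.
rewrite big_cons /= -addn1 natrD mulrDl mul1r addrC lerD //.
  by apply: IH => q Hq; apply: H; right.
by apply: H; left.
Qed.

Lemma term_le (R : realType) (n d r : nat) : (0 < n)%N -> (0 < d)%N ->
  (d < 2 ^ r)%N -> (r <= d.+1)%N ->
  ((n ^ (d.+1 - r))%:R : R) <= n%:R `^ (d%:R - log2 (d%:R : R) + 1).
Proof.
move=> n0 d0 dr rd.
rewrite natrX -powR_mulrn ?ler0n //; apply: ler_powR; first by rewrite ler1n.
have Hl : log2 (d%:R : R) <= r%:R.
  have l2 : (0 : R) < ln 2 by apply: ln_gt0; rewrite ltr1n.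
  rewrite /log2 ler_pdivrMr // mulr_natl -lnXn ?ltr0n //.
  have -> : (2 : R) ^+ r = (2 ^ r)%:R by rewrite natrX.
  rewrite ler_ln ?posrE ?ltr0n ?expn_gt0 // ler_nat; exact: ltnW.
rewrite natrB // -addn1 natrD; lra.
Qed.


Unset Implicit Arguments.

Theorem theorem4p2 (R : realType) (F : fieldType) (n d : nat)
  (M : 'M[F]_(n ^ d)) :
  (1 <= n)%N -> (1 <= d)%N ->
  ((PTrank M)%:R / (n%:R `^ (d%:R - log2 (d%:R : R) + 1))
     <= (Lncsm d.+1 (ShiftedTensor M))%:R :> R).
Proof.
case: n M => [//|n'] M _ d1.
have [HL _] := minNatP (SMle_ex (ShiftedTensor M) (ltn0Sn d)).
rewrite /Lncsm; set L := minNat _ in HL *.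
have [P [HP1 HP2 HP3]] := decomp HL.
have Hdec := PTdec_M (P := P) (fun q Hq => let: And3 h1 h2 _ := HP2 q Hq in conj h1 h2) HP3.
have Hr := PTrank_le Hdec.
set Q := n'.+1%:R `^ _.
have Q0 : (0 : R) < Q by rewrite /Q powR_gt0 // ltr0n.
rewrite ler_pdivrMr //.
apply: le_trans (_ : (\sum_(q <- P) (n'.+1 ^ (d.+1 - size q))%N)%:R <= _).
  by rewrite ler_nat.
rewrite natr_sum; apply: le_trans (sum_le_size (c := Q) _) _.
  move=> q Hq; have [h1 h2 h3] := HP2 q Hq.
  apply: term_le => //.
  by rewrite -h1; apply: size_le_plen.
by apply: ler_wpM2r; [exact: ltW | rewrite ler_nat].
Qed.
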